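(* Let $p\geq 1$ and let $n_0<n_1<\cdots<n_p$ be positive integers with $n_i=n_0+id$ for a fixed positive integer $d$, such that $\gcd(n_0,\dots,n_p)=1$ and $\{n_0,\dots,n_p\}$ minimally generates the numerical semigroup $S_1=\langle n_0,\dots,n_p\rangle$. Let $s\in\mathrm{Ap}(S_1,n_p)$ and suppose $s=\sum_{i=0}^p\lambda_in_i=\sum_{i=0}^p\lambda_i'n_i$ with all $\lambda_i,\lambda_i'\in\mathbb{N}$. Then \[\sum_{i=0}^p\lambda_i(p-i)d=\sum_{i=0}^p\lambda_i'(p-i)d.\]
   Context: For a numerical semigroup $T$ and $0\neq a\in T$, the Apéry set is $\mathrm{Ap}(T,a)=\{s\in T: s-a\notin T\}$. *)

(* Defs.v *)
From mathcomp Require Import all_boot.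
Set Implicit Arguments. Unset Strict Implicit. Unset Printing Implicit Defensive.

Definition in_sg (p : nat) (g : nat -> nat) (s : nat) : Prop :=
  exists lam : nat -> nat, s = \sum_(i < p.+1) lam i * g i.

(* Apery set Ap(S,a) = {s in S : s - a notin S} (s - a taken in Z;
   a negative integer is never in S). *)
Definition in_Apery (p : nat) (g : nat -> nat) (a s : nat) : Prop :=
  in_sg p g s /\ ~ (a <= s /\ in_sg p g (s - a)).

Definition minimally_generates (p : nat) (g : nat -> nat) : Prop :=
  forall j, j <= p ->
    ~ (exists lam : nat -> nat, lam j = 0 /\ g j = \sum_(i < p.+1) lam i * g i).

(* Main.v *)
Require Import Defs.
From mathcomp Require Import all_boot.
From mathcomp Require Import zify.

Lemma sum_delta p j (f : nat -> nat) : j <= p ->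
  \sum_(i < p.+1) (nat_of_ord i == j) * f i = f j.
Proof.
move=> hj.
have hj' : j < p.+1 by [].
rewrite (bigD1 (Ordinal hj')) //= eqxx mul1n big1 ?addn0 // => i hi.
have -> : (nat_of_ord i == j) = false.
  apply/negbTE; apply: contra hi => /eqP h; apply/eqP; exact: val_inj.
by rewrite mul0n.
Qed.

Lemma sum_split p (lam : nat -> nat) n0 d :
  \sum_(i < p.+1) lam i * (n0 + i * d) =
  (\sum_(i < p.+1) lam i) * n0 + (\sum_(i < p.+1) lam i * i) * d.
Proof.
rewrite !big_distrl -big_split /=; apply: eq_bigr => i _.
by rewrite mulnDr mulnA.
Qed.

Lemma sum_pi p (lam : nat -> nat) :
  \sum_(i < p.+1) lam i * (p - i) + \sum_(i < p.+1) lam i * i =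
  p * \sum_(i < p.+1) lam i.
Proof.
rewrite -big_split big_distrr /=; apply: eq_bigr => i _.
have := ltn_ord i; rewrite ltnS => hi.
by rewrite -mulnDr subnK // mulnC.
Qed.

Lemma rep p M B : B <= p * M ->
  exists mu : nat -> nat,
    \sum_(i < p.+1) mu i = M /\ \sum_(i < p.+1) mu i * i = B.
Proof.
elim: M B => [|M IH] B hB.
  exists (fun _ => 0); split; rewrite big1 //.
  by move: hB; rewrite muln0 leqn0 => /eqP ->.
pose j := minn B p.
have hj : j <= p by rewrite geq_minr.
have [mu [h1 h2]] := IH (B - j) ltac:(rewrite /j; lia).
exists (fun i => mu i + (i == j)); split.
  rewrite big_split /= h1.
  rewrite (eq_bigr (fun i : 'I_p.+1 => (nat_of_ord i == j) * 1)); last by move=> i _; rewrite muln1.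
  by rewrite (@sum_delta _ _ (fun _ => 1) hj) addn1.
rewrite (eq_bigr (fun i : 'I_p.+1 => mu i * i + (nat_of_ord i == j) * i)); last first.
  by move=> i _; rewrite mulnDl.
rewrite big_split /= h2 (@sum_delta _ _ (fun i => i) hj) /j; lia.
Qed.

Lemma len_ge L A L' A' n0 d : 0 < d -> coprime n0 d ->
  L * n0 + A * d = L' * n0 + A' * d -> L < L' -> n0 <= A.
Proof.
move=> d0 cop e lt.
have [k hk] : exists k, L' = L + k by exists (L' - L); rewrite subnKC // ltnW.
subst L'.
have k0 : 0 < k by move: lt; rewrite -{1}[L]addn0 ltn_add2l.
move: e; rewrite mulnDl -addnA => /eqP; rewrite eqn_add2l => /eqP e.
have hd : d %| k.
  have cop' : coprime d n0 by rewrite coprime_sym.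
  rewrite -(Gauss_dvdl _ cop') -(dvdn_addl _ (dvdn_mull A' (dvdnn d))) -e.
  exact: dvdn_mull.
have := dvdn_leq k0 hd => hdk.
rewrite -(leq_pmul2r d0) e mulnC.
apply: leq_trans (leq_addr _ _); exact: leq_mul.
Qed.

Theorem lemma4p4 (p n0 d : nat) (s : nat) (lam lam' : nat -> nat) :
  1 <= p -> 0 < n0 -> 0 < d ->
  \big[gcdn/0]_(i < p.+1) (n0 + i * d) = 1 ->
  minimally_generates p (fun i => n0 + i * d) ->
  in_Apery p (fun i => n0 + i * d) (n0 + p * d) s ->
  s = \sum_(i < p.+1) lam i * (n0 + i * d) ->
  s = \sum_(i < p.+1) lam' i * (n0 + i * d) ->
  \sum_(i < p.+1) lam i * (p - i) * d = \sum_(i < p.+1) lam' i * (p - i) * d.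
Proof.
move=> p1 n00 d0 hg hmin [_ hap] e1 e2.
have cop : coprime n0 d.
  rewrite /coprime -dvdn1 -hg.
  apply: (big_ind (fun x => gcdn n0 d %| x)) => //.
    by move=> x y hx hy; rewrite dvdn_gcd hx hy.
  by move=> i _; rewrite dvdn_add ?dvdn_gcdl // dvdn_mull // dvdn_gcdr.
have pn0 : p < n0.
  rewrite ltnNge; apply/negP => hle.
  apply: (hmin p (leqnn p)).
  exists (fun i => d * (i == 0) + (i == p - n0)); split.
    have h1 : (p == 0) = false by apply/negbTE; rewrite -lt0n.
    have h2 : (p == p - n0) = false.
      by apply/negbTE; rewrite neq_ltn ltn_subrL n00 p1 orbT.
    by rewrite h1 h2 muln0.
  rewrite (sum_split p (fun i => d * (i == 0) + (i == p - n0))) /=.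
  rewrite (eq_bigr (fun i : 'I_p.+1 => (nat_of_ord i == 0) * d + (nat_of_ord i == p - n0) * 1)); last first.
    by move=> i _; rewrite mulnC muln1.
  rewrite big_split /= (@sum_delta _ _ (fun _ => d)) // (@sum_delta _ _ (fun _ => 1)) ?leq_subr //.
  rewrite (eq_bigr (fun i : 'I_p.+1 => (nat_of_ord i == 0) * (d * i) + (nat_of_ord i == p - n0) * i)); last first.
    by move=> i _; rewrite mulnDl -mulnA mulnCA.
  rewrite big_split /= (@sum_delta _ _ (fun i => d * i)) // (@sum_delta _ _ (fun i => i)) ?leq_subr //.
  have hnd : n0 * d <= p * d by rewrite leq_mul2r hle orbT.
  rewrite ?muln0 ?add0n ?mulnBl ?mulnDl ?mul1n ?muln1 ?[d * n0]mulnC.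
  lia.
have key : forall (l l' : nat -> nat),
    s = \sum_(i < p.+1) l i * (n0 + i * d) ->
    s = \sum_(i < p.+1) l' i * (n0 + i * d) ->
    \sum_(i < p.+1) l i < \sum_(i < p.+1) l' i -> False.
  move=> l l' f1 f2 lt.
  rewrite sum_split in f1; rewrite sum_split in f2.
  set L := \sum_(i < p.+1) l i in f1 lt.
  set A := \sum_(i < p.+1) l i * i in f1.
  have hA : n0 <= A by apply: (len_ge L A (\sum_(i < p.+1) l' i) (\sum_(i < p.+1) l' i * i) n0 d d0 cop _ lt); rewrite -f1 -f2.
  have hAL : A <= p * L by rewrite -(sum_pi p l) leq_addl.
  have [L1 hL1] : exists L1, L = L1 + 1.
    exists (L - 1); rewrite subnK //; case: (posnP L) hAL => [->|//].
    rewrite muln0 leqn0 => /eqP hA0; move: hA pn0; rewrite hA0; lia.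
  have [A1 hA1] : exists A1, A = A1 + p.
    by exists (A - p); rewrite subnK //; apply: leq_trans hA; apply: ltnW.
  have hB : A1 <= p * L1.
    by move: hAL; rewrite hL1 hA1 mulnDr muln1 leq_add2r.
  have [mu [m1 m2]] := rep _ _ _ hB.
  have es : s = L1 * n0 + A1 * d + (n0 + p * d).
    by rewrite f1 hL1 hA1 !mulnDl mul1n addnACA.
  apply: hap; split; first by rewrite es leq_addl.
  by exists mu; rewrite /= sum_split m1 m2 es addnK.
have hL : \sum_(i < p.+1) lam i = \sum_(i < p.+1) lam' i.
  case: (ltngtP (\sum_(i < p.+1) lam i) (\sum_(i < p.+1) lam' i)) => // h.
    by case: (key lam lam' e1 e2 h).
  by case: (key lam' lam e2 e1 h).
have hA : \sum_(i < p.+1) lam i * i = \sum_(i < p.+1) lam' i * i.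
  move: e1 e2; rewrite !sum_split hL => -> /eqP.
  by rewrite eqn_add2l eqn_pmul2r // => /eqP.
rewrite -!big_distrl /=; congr (_ * d).
have := sum_pi p lam; have := sum_pi p lam'; rewrite hL hA => <- /eqP.
by rewrite eqn_add2r => /eqP.
Qed.
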